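(* Let $G$ be a partial cube and let $F_1$ and $F_2$ be $\Theta$-classes of $G$. Then $F_1 \cup F_2$ is an edge general position set of $G$.
   Context: Graphs are finite and connected. A graph $G$ is a partial cube if it is an isometric subgraph of some hypercube $Q_r$ (i.e., distances in $G$ equal distances in $Q_r$). The Djoković–Winkler relation $\Theta$ on the edges of $G$ is defined by: edges $xy$ and $uv$ are in relation $\Theta$ if $d_G(x,u) + d_G(y,v) \neq d_G(x,v) + d_G(y,u)$. In a partial cube, $\Theta$ is an equivalence relation, and its equivalence classes are called $\Theta$-classes. A set $S$ of edges of $G$ is an edge general position set if no geodesic (shortest path) of $G$ contains three edges of $S$. *)

(* Defs.v *)
(* Simple graphs as symmetric irreflexive relations on a finType. *)
From mathcomp Require Import all_boot.
Set Implicit Arguments. Unset Strict Implicit. Unset Printing Implicit Defensive.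

Section Graphs.
Variable T : finType.
Variable e : rel T.

Definition walkb (n : nat) (x y : T) : bool :=
  [exists p : n.-tuple T, path e x p && (last x p == y)].

(* graph distance: the least n (< #|T|) admitting a walk of length n from x to y;
   in a connected graph this is the usual shortest-path distance *)
Definition dist (x y : T) : nat := find (fun n => walkb n x y) (iota 0 #|T|).

Definition geodesic (x : T) (p : seq T) : bool :=
  path e x p && (size p == dist x (last x p)).

Definition walk_edges (x : T) (p : seq T) : {set {set T}} :=
  [set E in pairmap (fun a b => [set a; b]) x p].

Definition edge_gp_set (S : {set {set T}}) : Prop :=
  forall x p, geodesic x p -> #|S :&: walk_edges x p| < 3.

Definition theta (x y u v : T) : bool :=
  dist x u + dist y v != dist x v + dist y u.

Definition theta_class (x y : T) : {set {set T}} :=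
  [set E | [exists u, exists v, [&& e u v, E == [set u; v] & theta x y u v]]].

Definition connected_graph : Prop := forall x y, connect e x y.
End Graphs.

Definition hypercube_rel (r : nat) : rel {ffun 'I_r -> bool} :=
  fun f g => #|[set i | f i != g i]| == 1.

Definition partial_cube (T : finType) (e : rel T) : Prop :=
  exists r (phi : T -> {ffun 'I_r -> bool}),
    forall x y, dist e x y = dist (@hypercube_rel r) (phi x) (phi y).

(* Main.v *)
Require Import Defs.
From mathcomp Require Import all_boot.
Set Implicit Arguments. Unset Strict Implicit. Unset Printing Implicit Defensive.

Lemma dist_eq (T : finType) (e : rel T) x y n :
  walkb e n x y -> n < #|T| -> (forall m, m < n -> ~~ walkb e m x y) ->
  dist e x y = n.
Proof.
move=> wn ltn lt; rewrite /dist.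
have hs : has (fun m => walkb e m x y) (iota 0 #|T|).
  by apply/hasP; exists n => //; rewrite mem_iota.
set k := find _ _.
have kl : k < #|T| by rewrite -(size_iota 0 #|T|) -has_find.
case: (ltngtP k n) => // H.
- have := nth_find 0 hs; rewrite -/k nth_iota // add0n => W.
  by move: (lt _ H); rewrite W.
- by have := before_find 0 H; rewrite nth_iota // add0n wn.
Qed.

Definition Dset r (f g : {ffun 'I_r -> bool}) := [set k | f k != g k].
Definition hd r (f g : {ffun 'I_r -> bool}) := #|Dset f g|.

Lemma hd_tri r (f m g : {ffun 'I_r -> bool}) : hd f g <= hd f m + hd m g.
Proof.
have S : Dset f g \subset Dset f m :|: Dset m g.
  apply/subsetP => k; rewrite !inE; by case: (f k); case: (m k); case: (g k).
rewrite /hd; apply: (leq_trans (subset_leq_card S)).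
by rewrite cardsU leq_subr.
Qed.

Lemma path_hd r (f : {ffun 'I_r -> bool}) p :
  path (@hypercube_rel r) f p -> hd f (last f p) <= size p.
Proof.
elim: p f => [|y p IH] f /=.
  by move=> _; rewrite /hd leqn0 cards_eq0; apply/eqP/setP => k; rewrite !inE eqxx.
case/andP => /eqP H1 /IH H2.
apply: leq_trans (hd_tri f y _) _; rewrite /hd H1 add1n ltnS; exact: H2.
Qed.

Lemma walk_hd r n (f g : {ffun 'I_r -> bool}) :
  walkb (@hypercube_rel r) n f g -> hd f g <= n.
Proof.
case/existsP => t /andP[pt /eqP <-]; have := path_hd pt; by rewrite size_tuple.
Qed.

Lemma hd_walk r n : forall (f g : {ffun 'I_r -> bool}),
  hd f g = n -> walkb (@hypercube_rel r) n f g.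
Proof.
elim: n => [|n IH] f g H.
  apply/existsP; exists [tuple]; rewrite /=; apply/eqP/ffunP => k.
  apply/eqP; apply: contraT => nk.
  have : k \in Dset f g by rewrite inE.
  by rewrite (cards0_eq H) inE.
have [k Hk] : exists k, k \in Dset f g by apply/card_gt0P; rewrite /hd in H; rewrite H.
pose f' := [ffun i => if i == k then ~~ f i else f i].
have e1 : Dset f f' = [set k].
  apply/setP => i; rewrite !inE ffunE; case: (i =P k) => _; by case: (f i).
have e2 : Dset f' g = Dset f g :\ k.
  apply/setP => i; rewrite !inE ffunE; case: (i =P k) => [->|] //=.
  by move: Hk; rewrite inE; case: (f k); case: (g k).
have : hd f' g = n.
  by move: H; rewrite /hd e2 (cardsD1 k (Dset f g)) Hk add1n => -[].
case/IH/existsP => t /andP[pt lt].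
apply/existsP; exists (cons_tuple f' t) => /=.
by rewrite pt lt andbT /hypercube_rel -/(Dset f f') e1 cards1.
Qed.

Lemma distQ r (f g : {ffun 'I_r -> bool}) : dist (@hypercube_rel r) f g = hd f g.
Proof.
apply: dist_eq; first exact: hd_walk.
  rewrite card_ffun card_bool card_ord.
  apply: leq_ltn_trans (ltn_expl r (isT : 1 < 2)).
  by rewrite /hd -[X in _ <= X](card_ord r) max_card.
move=> m H; apply/negP => /walk_hd; by rewrite leqNgt H.
Qed.

Lemma hd_sum r (f g : {ffun 'I_r -> bool}) : hd f g = \sum_k (f k != g k).
Proof.
rewrite /hd -sum1_card big_mkcond /=; apply: eq_bigr => k _; rewrite inE.
by case: (_ != _).
Qed.

Lemma hd_sum_eq r (f1 g1 f2 g2 : {ffun 'I_r -> bool}) :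
  (forall k, ~~ ((f1 k != g1 k) && (f2 k != g2 k))) ->
  hd f1 f2 + hd g1 g2 = hd f1 g2 + hd g1 f2.
Proof.
move=> H; rewrite !hd_sum -!big_split /=; apply: eq_bigr => k _.
move: (H k); by case: (f1 k); case: (g1 k); case: (f2 k); case: (g2 k).
Qed.

Lemma dist_edge (T : finType) (e : rel T) (eirr : irreflexive e) a b :
  e a b -> dist e a b = 1.
Proof.
move=> eab; have ab : a != b by apply/eqP => ab; subst; rewrite eirr in eab.
apply: dist_eq.
- by apply/existsP; exists [tuple b]; rewrite /= eab eqxx.
- by apply: leq_trans (max_card [set a; b]); rewrite cards2 ab.
- case=> // _; apply/negP => /existsP[t]; rewrite (tuple0 t) /=.
  by rewrite (negbTE ab).
Qed.

Section Main.
Variables (T : finType) (e : rel T) (r : nat) (phi : T -> {ffun 'I_r -> bool}).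
Hypothesis eirr : irreflexive e.
Hypothesis hphi : forall x y, dist e x y = dist (@hypercube_rel r) (phi x) (phi y).

Definition Dp (a b : T) := Dset (phi a) (phi b).
Definition key (E : {set T}) : {set 'I_r} :=
  [set k | [exists a in E, exists b in E, phi a k != phi b k]].

Lemma hdist x y : dist e x y = hd (phi x) (phi y).
Proof. by rewrite hphi distQ. Qed.

Lemma Dp_edge a b : e a b -> #|Dp a b| = 1.
Proof. move=> H; by rewrite /Dp -/(hd _ _) -hdist dist_edge. Qed.

Lemma key2 a b : key [set a; b] = Dp a b.
Proof.
apply/setP => k; rewrite !inE; apply/idP/idP.
- case/exists_inP => a' /set2P[] -> /exists_inP[b' /set2P[] -> H] //;
    by [rewrite eqxx in H | rewrite eq_sym].
- move=> H; apply/exists_inP; exists a; first by rewrite !inE eqxx.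
  by apply/exists_inP; exists b; rewrite ?inE ?eqxx ?orbT.
Qed.

Lemma path_cover x p : Dp x (last x p) \subset \bigcup_(K <- pairmap Dp x p) K.
Proof.
elim: p x => [|y p IH] x /=.
  by apply/subsetP => k; rewrite inE eqxx.
rewrite big_cons; apply/subsetP => k; rewrite /Dp /Dset in IH *; rewrite !inE => H.
case: (boolP (phi x k != phi y k)) => [Hb| /negPn/eqP E].
  by apply/orP; left.
apply/orP; right; apply: (subsetP (IH y)); by rewrite inE -E.
Qed.

Lemma card_bigcup (s : seq {set 'I_r}) : #|\bigcup_(K <- s) K| <= \sum_(K <- s) #|K|.
Proof.
elim: s => [|K s IH]; first by rewrite !big_nil cards0.
rewrite !big_cons cardsU; apply: leq_trans (leq_subr _ _) _; by rewrite leq_add2l.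
Qed.

Lemma path_card1 x p : path e x p -> forall K, K \in pairmap Dp x p -> #|K| = 1.
Proof.
elim: p x => [|y p IH] x //= /andP[exy pth] K; rewrite inE => /orP[/eqP ->|].
  exact: Dp_edge.
exact: IH.
Qed.

Lemma geo_uniq x p : geodesic e x p -> uniq (pairmap Dp x p).
Proof.
case/andP => pth /eqP sz; apply: contraT => nu.
have h1 : size p = hd (phi x) (phi (last x p)) by rewrite sz hdist.
have h2 : hd (phi x) (phi (last x p)) <= #|\bigcup_(K <- undup (pairmap Dp x p)) K|.
  rewrite big_undup; last exact: setUid.
  exact: subset_leq_card (path_cover x p).
have h3 : \sum_(K <- undup (pairmap Dp x p)) #|K| = size (undup (pairmap Dp x p)).
  rewrite -sum1_size big_seq [RHS]big_seq; apply: eq_bigr => K.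
  rewrite mem_undup; exact: path_card1.
have := ltn_size_undup (pairmap Dp x p); rewrite nu size_pairmap => h4.
have := leq_trans h2 (card_bigcup _); rewrite h3 -h1 => h5.
by have := leq_ltn_trans h5 h4; rewrite ltnn.
Qed.

Lemma map_key x p : map key (pairmap (fun a b => [set a; b]) x p) = pairmap Dp x p.
Proof. elim: p x => [|y p IH] x //=; by rewrite key2 IH. Qed.

Lemma uniq_inj (A B : eqType) (f : A -> B) (s : seq A) :
  uniq (map f s) -> {in s &, injective f}.
Proof.
elim: s => [|a s IH] //= /andP[na us] u v; rewrite !inE.
case/orP => [/eqP ->|us']; case/orP => [/eqP ->|vs'] // E.
- by move: na; rewrite E map_f.
- by move: na; rewrite -E map_f.
- exact: IH.
Qed.

Lemma theta_key x y E : e x y -> E \in theta_class e x y -> key E = Dp x y.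
Proof.
move=> exy; rewrite inE => /existsP[u /existsP[v /and3P[euv /eqP -> th]]].
rewrite key2; apply/eqP; apply: contraNT th => neq.
rewrite !hdist; apply/eqP; apply: hd_sum_eq => k.
have /eqP/cards1P[kx Ex] := Dp_edge exy.
have /eqP/cards1P[ku Eu] := Dp_edge euv.
apply/negP => /andP[Hx Hu].
have : k \in Dp x y by rewrite inE.
have : k \in Dp u v by rewrite inE.
rewrite Ex Eu !inE => /eqP k1 /eqP k2.
by move: neq; rewrite Ex Eu -k1 -k2 eqxx.
Qed.

End Main.

Theorem lemma3p1 (T : finType) (e : rel T)
  (esym : symmetric e) (eirr : irreflexive e) (econn : connected_graph e)
  (hpc : partial_cube e)
  (x1 y1 x2 y2 : T) (h1 : e x1 y1) (h2 : e x2 y2) :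
  edge_gp_set e (theta_class e x1 y1 :|: theta_class e x2 y2).
Proof.
case: hpc => r [phi hphi] x p geo.
set A := _ :&: _.
have inj : {in A &, injective (key phi)}.
  move=> E1 E2; rewrite !inE => /andP[_ H1] /andP[_ H2].
  apply: (uniq_inj (s := pairmap (fun a b => [set a; b]) x p)) => //.
  rewrite map_key. exact: (@geo_uniq T e r phi eirr hphi x p geo).
have sub : key phi @: A \subset [set Dp phi x1 y1; Dp phi x2 y2].
  apply/subsetP => K /imsetP[E]; rewrite in_setI in_setU => /andP[/orP[H|H] _] ->.
  - by rewrite !inE (theta_key eirr hphi h1 H) eqxx.
  - by rewrite !inE (theta_key eirr hphi h2 H) eqxx orbT.
rewrite -(card_in_imset inj); apply: leq_ltn_trans (subset_leq_card sub) _.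
by rewrite cards2; case: (_ != _).
Qed.
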